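(* Let $T\in S(n,d)$ and let $\sigma$ be a simplex on $\gamma_d$ with vertices among the $n$ points of $C(n,d)$. Then $\sigma\le_{d+1}T$ if and only if for every $\tau\in T$, either $\sigma$ and $\tau$ do not overlap in $\mathbb{R}^d$ or $\sigma<_{d+1}\tau$.
   Context: $\gamma_d=\{(t,t^2,\dots,t^d):t\in\mathbb{R}\}$. Fix $t_1<\dots<t_n$ and the points $\gamma_d(t_i)$, identified with $i\in[n]$; $C(n,d)$ is their convex hull (cyclic polytope). $S(n,d)$ is the set of triangulations of $C(n,d)$ (geometric simplicial complexes with union $C(n,d)$) whose vertices lie in $[n]$. A simplex is a subset $\sigma$ of size at most $d+1$, identified with $\mathrm{conv}(\sigma)$; two simplices overlap if $\mathrm{conv}(\sigma)\cap\mathrm{conv}(\tau)\supsetneq\mathrm{conv}(\sigma\cap\tau)$. For $\sigma=\{\gamma_d(s_1),\dots,\gamma_d(s_k)\}$, the height function $h_\sigma:\mathrm{conv}(\sigma)\to\mathbb{R}$ gives the last coordinate of the point of $\mathrm{conv}\{\gamma_{d+1}(s_1),\dots,\gamma_{d+1}(s_k)\}$ projecting (by deleting the last coordinate) to $p$. $\sigma<_{d+1}\tau$ means $\sigma,\tau$ overlap in $\mathbb{R}^d$ and $h_\sigma\le h_\tau$ on the common domain. For $T\in S(n,d)$, $h_T:C(n,d)\to\mathbb{R}$ is defined by $h_T(p)=h_\tau(p)$ for $p\in\mathrm{conv}(\tau)$, $\tau\in T$ (well defined). $\sigma\le_{d+1}T$ means $h_\sigma(p)\le h_T(p)$ for all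 $p\in\mathrm{conv}(\sigma)$. *)

(* Defs.v *)
From HB Require Import structures.
From mathcomp Require Import all_boot all_order all_algebra.
From mathcomp Require Import boolp classical_sets reals.
Unset Printing Implicit Defensive.
Import Order.TTheory GRing.Theory Num.Theory.
Local Open Scope ring_scope.
Local Open Scope classical_set_scope.

Definition gamma {R : realType} (d : nat) (s : R) : 'rV[R]_d :=
  \row_(k < d) s ^+ k.+1.

Definition convex_coeffs {R : realType} {n : nat} (sg : {set 'I_n})
  (lam : 'I_n -> R) : Prop :=
  [/\ forall i, 0 <= lam i, forall i, i \notin sg -> lam i = 0
    & \sum_i lam i = 1].

Definition conv {R : realType} {n : nat} (d : nat) (t : 'I_n -> R) (sg : {set 'I_n})
  : set 'rV[R]_d :=
  [set p | exists lam, convex_coeffs sg lam /\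
                      p = \sum_i lam i *: gamma d (t i)].

(* y is the last coordinate of the point of conv{gamma_{d+1}(t_i) : i in sg}
   whose projection (delete last coordinate) is p. *)
Definition height_rel {R : realType} {n : nat} (d : nat) (t : 'I_n -> R)
  (sg : {set 'I_n}) (p : 'rV[R]_d) (y : R) : Prop :=
  exists lam, [/\ convex_coeffs sg lam,
                  p = \sum_i lam i *: gamma d (t i)
                & y = \sum_i lam i * t i ^+ d.+1].

(* The height function h_sigma (its value is the unique y above when
   p is in conv(sigma); arbitrary otherwise). *)
Definition height {R : realType} {n : nat} (d : nat) (t : 'I_n -> R)
  (sg : {set 'I_n}) (p : 'rV[R]_d) : R :=
  xget 0 (height_rel d t sg p).

Definition overlap {R : realType} {n : nat} (d : nat) (t : 'I_n -> R)
  (sg tau : {set 'I_n}) : Prop :=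
  conv d t (sg :&: tau) `<` (conv d t sg `&` conv d t tau).

Definition lt_simp {R : realType} {n : nat} (d : nat) (t : 'I_n -> R)
  (sg tau : {set 'I_n}) : Prop :=
  overlap d t sg tau /\
  forall p, conv d t sg p -> conv d t tau p -> height d t sg p <= height d t tau p.

(* Triangulations of C(n,d) with vertices in [n]: geometric simplicial
   complexes (simplices of size <= d+1, closed under faces, any two meeting
   in a common face, i.e. not overlapping) whose union is C(n,d). *)
Definition triangulation {R : realType} {n : nat} (d : nat) (t : 'I_n -> R)
  (T : {set {set 'I_n}}) : Prop :=
  [/\ forall sg, sg \in T -> (#|sg| <= d.+1)%N,
      forall sg tau : {set 'I_n}, sg \in T -> tau \subset sg -> tau \in T,
      forall sg tau : {set 'I_n}, sg \in T -> tau \in T -> ~ overlap d t sg tau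
    & forall p : 'rV[R]_d, conv d t [set: 'I_n]%SET p <-> exists2 sg, sg \in T & conv d t sg p].

Definition height_T {R : realType} {n : nat} (d : nat) (t : 'I_n -> R)
  (T : {set {set 'I_n}}) (p : 'rV[R]_d) : R :=
  match [pick tau in T | `[< conv d t tau p >]] with
  | Some tau => height d t tau p
  | None => 0
  end.

Definition le_T {R : realType} {n : nat} (d : nat) (t : 'I_n -> R)
  (sg : {set 'I_n}) (T : {set {set 'I_n}}) : Prop :=
  forall p : 'rV[R]_d, conv d t sg p -> height d t sg p <= height_T d t T p.

(* Main.v *)
Require Import Defs.
From HB Require Import structures.
From mathcomp Require Import all_boot all_order all_algebra.
From mathcomp Require Import boolp classical_sets reals.
Import Order.TTheory GRing.Theory Num.Theory.
Local Open Scope ring_scope.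

Section S.
Variables (R : realType) (n d : nat) (t : 'I_n -> R).
Hypothesis ht : forall i j : 'I_n, (i < j)%N -> t i < t j.

Lemma t_inj i j : i != j -> t i != t j.
Proof.
move=> nij; case: (ltngtP i j) => h.
- by rewrite lt_eqF // ht.
- by rewrite gt_eqF // ht.
- by move: nij; rewrite (val_inj h) eqxx.
Qed.

Lemma vander_zero (S : {set 'I_n}) (c : 'I_n -> R) :
  (#|S| <= d.+1)%N -> (forall i, i \notin S -> c i = 0) ->
  (forall k, (k <= d)%N -> \sum_l c l * t l ^+ k = 0) ->
  forall i, c i = 0.
Proof.
move=> hS cS hk i.
case: (boolP (i \in S)) => iS; last exact: cS.
pose P := \prod_(l <- enum (S :\ i)) ('X - (t l)%:P).
have sP : (size P <= d.+1)%N.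
  rewrite /P size_prod_XsubC -cardE.
  by move: hS; rewrite (cardsD1 i S) iS.
have E : \sum_l c l * P.[t l] = 0.
  under eq_bigr => l _ do rewrite horner_coef big_distrr /=.
  rewrite exchange_big /= big1 // => k _.
  transitivity (P`_k * \sum_l c l * t l ^+ k).
    by rewrite big_distrr; apply: eq_bigr => l _; rewrite mulrCA.
  by rewrite hk ?mulr0 // -ltnS; apply: leq_trans (ltn_ord k) sP.
rewrite (bigD1 i) //= big1 ?addr0 in E; last first.
  move=> l nli; case: (boolP (l \in S)) => lS; last by rewrite cS ?mul0r.
  rewrite /P horner_prod big_enum /=.
  apply/eqP; rewrite mulf_eq0; apply/orP; right; apply/prodf_eq0.
  by exists l; rewrite ?in_setD1 ?nli ?lS // hornerXsubC subrr.
move/eqP: E; rewrite mulf_eq0 => /orP[/eqP //|].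
rewrite /P horner_prod big_enum /=.
move=> /prodf_eq0 [l]; rewrite in_setD1 => /andP[nli _].
by rewrite hornerXsubC subr_eq0 (negbTE (t_inj _ _ _)) // eq_sym.
Qed.

Lemma coeffs_sub (A S : {set 'I_n}) (lam : 'I_n -> R) :
  A \subset S -> convex_coeffs A lam -> convex_coeffs S lam.
Proof.
move=> AS [h1 h2 h3]; split=> // i iS; apply: h2.
by apply: contraNN iS; apply: (fintype.subsetP AS).
Qed.

Arguments coeffs_sub {A S lam}.

Lemma coeffs_eq (S : {set 'I_n}) (lam mu : 'I_n -> R) :
  (#|S| <= d.+1)%N -> convex_coeffs S lam -> convex_coeffs S mu ->
  \sum_i lam i *: gamma d (t i) = \sum_i mu i *: gamma d (t i) ->
  forall i, lam i = mu i.
Proof.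
move=> hS [_ l2 l3] [_ m2 m3] e i; apply/eqP; rewrite -subr_eq0; apply/eqP.
apply: (@vander_zero S (fun j => lam j - mu j)) => //.
  by move=> j jS; rewrite l2 // m2 // subrr.
case=> [|k] hk.
  under eq_bigr => l _ do rewrite expr0 mulr1.
  by rewrite sumrB l3 m3 subrr.
have := congr1 (fun M : 'rV[R]_d => M 0 (Ordinal hk)) e.
rewrite !summxE /=.
under eq_bigr => l _ do rewrite mxE /gamma mxE.
under [X in _ = X -> _]eq_bigr => l _ do rewrite mxE /gamma mxE.
move=> e'; under eq_bigr => l _ do rewrite mulrBl.
by rewrite sumrB e' subrr.
Qed.
Arguments coeffs_eq {S lam mu}.

Lemma height_val (A S : {set 'I_n}) (lam : 'I_n -> R) p :
  (#|S| <= d.+1)%N -> A \subset S -> convex_coeffs A lam ->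
  p = \sum_i lam i *: gamma d (t i) ->
  height d t S p = \sum_i lam i * t i ^+ d.+1.
Proof.
move=> hS AS hl ep; have hl' := coeffs_sub AS hl.
rewrite /height; case: xgetP => [y -> [mu [hm ep' ->]] | H].
  have E := coeffs_eq hS hl' hm (etrans (esym ep) ep').
  by apply: eq_bigr => i _; rewrite E.
by exfalso; apply: (H (\sum_i lam i * t i ^+ d.+1)); exists lam.
Qed.

Arguments height_val {A S lam p}.

Lemma conv_sub (A S : {set 'I_n}) p : A \subset S -> conv d t A p -> conv d t S p.
Proof. by move=> AS [lam [hl ep]]; exists lam; split=> //; apply: coeffs_sub AS hl. Qed.

Arguments conv_sub {A S p}.

Lemma nonoverlap sg tau p : ~ overlap d t sg tau -> conv d t sg p -> conv d t tau p ->
  conv d t (sg :&: tau) p.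
Proof.
move=> no ps pt; apply: contrapT => np; apply: no; split.
  move=> q qc; split; apply: conv_sub qc; [exact: subsetIl | exact: subsetIr].
by move=> H; apply: np; apply: H.
Qed.

Lemma height_common (S1 S2 : {set 'I_n}) p :
  (#|S1| <= d.+1)%N -> (#|S2| <= d.+1)%N -> conv d t (S1 :&: S2) p ->
  height d t S1 p = height d t S2 p.
Proof.
move=> h1 h2 [lam [hl ep]].
rewrite (height_val h1 (subsetIl _ _) hl ep).
by rewrite (height_val h2 (subsetIr _ _) hl ep).
Qed.
End S.
Arguments height_common {R n d t} ht {S1 S2 p}.
Arguments nonoverlap {R n d t sg tau p}.
Arguments conv_sub {R n d t A S p}.

Theorem lemma2p9 (R : realType) (n d : nat) (t : 'I_n -> R)
  (ht : forall i j : 'I_n, (i < j)%N -> t i < t j)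
  (T : {set {set 'I_n}}) (hT : triangulation d t T)
  (sg : {set 'I_n}) (hsg : (#|sg| <= d.+1)%N) :
  le_T d t sg T <->
  (forall tau, tau \in T -> ~ overlap d t sg tau \/ lt_simp d t sg tau).
Proof.
case: hT => hcard _ hno hcov; split.
- move=> H tau tT; case: (pselect (overlap d t sg tau)) => ov; last by left.
  right; split => // p ps pt; have := H p ps; rewrite /height_T.
  case: pickP => [tau' /andP[t'T /asboolP pt'] | none].
    rewrite (height_common ht (hcard _ t'T) (hcard _ tT)) //.
    exact: nonoverlap (hno _ _ t'T tT) pt' pt.
  by have := none tau; rewrite tT /=; move/asboolPn.
- move=> H p ps; rewrite /height_T.
  case: pickP => [tau' /andP[t'T /asboolP pt'] | none].
    case: (H _ t'T) => [no | [_ le]]; last exact: le.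
    rewrite (height_common ht hsg (hcard _ t'T)) //.
    exact: nonoverlap no ps pt'.
  have : conv d t [set: 'I_n]%SET p by apply: conv_sub ps; exact: finset.subsetT.
  move/hcov => [tau tT pt]; have := none tau; rewrite tT /=.
  by move/asboolPn.
Qed.
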